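(* Let $\mathcal{Y}_c$ and $\mathcal{X}$ be the supports of an endogenous covariate $Y_c$ and an exogenous covariate vector $X$, with joint distribution $P_{Y_c,X}$ and marginal $P_X$. Consider the structural model $Y_o=\Lambda\big(f_{\theta_0}(Y_c,X)+\varepsilon\big)$ with $\mathbb{E}[\varepsilon\mid X]=0$, where $\Lambda$ is a known linear map and $\{f_\theta:\theta\in\Theta\}$ is a known family of real-valued functions on $\mathcal{Y}_c\times\mathcal{X}$. Let $\mathcal{F}$ be an eligible set of real-valued functions on $\mathcal{Y}_c\times\mathcal{X}$ (square-integrable under $P_{Y_c,X}$), and define \[ \mathcal{F}_\Theta:=\big\{(y_c,x)\mapsto f_\theta(y_c,x)+f(y_c,x)-\mathbb{E}[f(Y_c,X)\mid X=x]\ :\ \theta\in\Theta,\ f\in\mathcal{F}\big\}\subseteq\mathcal{F}. \] Suppose $\mathcal{F}_\Theta$ and $\mathcal{F}$ are linear spaces and let $d$ be the mean-squared distance on $\mathcal{F}$, $d(f,g)=\mathbb{E}_{P_{Y_c,X}}\big[(f(Y_c,X)-g(Y_c,X))^2\big]$, with $d(\mathcal{F}_\Theta,g):=\inf_{f\in\mathcal{F}_\Theta}d(f,g)$. Then for every $g\in\mathcal{F}$, \[ d(\mathcal{F}_\Theta,g)=\inf_{\theta\in\Theta}\overline{d}(\overline{f}_\theta,\overline{g}), \] where $\overline{f}_\theta(x):=\mathbb{E}[f_\theta(Y_c,X)\mid X=x]$, $\overline{g}(x):=\mathbb{E}[g(Y_c,X)\mid X=x]$, and $\overline{d}(\ov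erline{f},\overline{g}):=\mathbb{E}_{P_X}\big[(\overline{f}(X)-\overline{g}(X))^2\big]$.
   Context: Conditional expectations are with respect to the joint distribution of $(Y_c,X)$. The set $\mathcal{F}_\Theta$ represents all mappings consistent with the model (the nonparametric part $f-\mathbb{E}[f\mid X]$ encodes an unrestricted error satisfying only the conditional mean-zero restriction). *)

(* Defs.v *)
From HB Require Import structures.
From mathcomp Require Import all_boot all_order all_algebra.
From mathcomp Require Import all_classical all_reals all_analysis.
Set Implicit Arguments. Unset Strict Implicit. Unset Printing Implicit Defensive.
Import Order.TTheory GRing.Theory Num.Theory.
Local Open Scope classical_set_scope.
Local Open Scope ring_scope.

Section defs.
Context {R : realType} {d1 d2 : measure_display}
  {Yc : measurableType d1} {X : measurableType d2}.
Local Open Scope ereal_scope.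

Definition sq_integrable d (T : measurableType d)
  (mu : {measure set T -> \bar R}) (f : T -> R) : Prop :=
  measurable_fun setT f /\ mu.-integrable setT (fun z => ((f z) ^+ 2)%:E).

(* h is (a version of) E[f(Y_c,X) | X = .] : h is measurable and
   E[f 1_{X in A}] = E[h(X) 1_{X in A}] for every measurable A. *)
Definition is_cond_exp_X (P : probability (Yc * X)%type R)
  (f : Yc * X -> R) (h : X -> R) : Prop :=
  measurable_fun setT h /\
  P.-integrable setT (fun z => (h z.2)%:E) /\
  forall A : set X, measurable A ->
    \int[P]_(z in snd @^-1` A) (f z)%:E = \int[P]_(z in snd @^-1` A) (h z.2)%:E.

Definition msd d (T : measurableType d) (mu : {measure set T -> \bar R})
  (f g : T -> R) : \bar R :=
  \int[mu]_(z in setT) (((f z - g z) ^+ 2)%R)%:E.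

Definition msd_set d (T : measurableType d) (mu : {measure set T -> \bar R})
  (S : set (T -> R)) (g : T -> R) : \bar R :=
  ereal_inf [set msd mu f g | f in S].

Definition is_linear_space d (T : measurableType d) (S : set (T -> R)) : Prop :=
  S (fun _ => 0%R) /\
  (forall f g, S f -> S g -> S (fun z => f z + g z)%R) /\
  (forall (a : R) f, S f -> S (fun z => a * f z)%R).

Definition F_Theta (Theta : Type) (ftheta : Theta -> Yc * X -> R)
  (F : set (Yc * X -> R)) (ce : (Yc * X -> R) -> X -> R) : set (Yc * X -> R) :=
  [set h | exists theta f, F f /\
     h = (fun z => ftheta theta z + f z - ce f z.2)%R].

End defs.

(* Main.v *)
Require Import Defs.
From HB Require Import structures.
From mathcomp Require Import all_boot all_order all_algebra.
From mathcomp Require Import all_classical all_reals all_analysis.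
From mathcomp Require Import measurable_realfun.
From mathcomp Require Import ring lra.
Set Implicit Arguments. Unset Strict Implicit. Unset Printing Implicit Defensive.
Import Order.TTheory GRing.Theory Num.Theory.
Import numFieldNormedType.Exports.
Local Open Scope classical_set_scope.
Local Open Scope ring_scope.

Section approxfacts.
Context d (T : measurableType d) (R : realType) (f : T -> \bar R)
  (mf : measurable_fun setT f).

Lemma mdyadic n k : measurable (dyadic_approx setT f n k).
Proof.
rewrite /dyadic_approx; case: ifPn => [kn|_]//; rewrite -preimage_comp.
by apply: mf => //; apply/measurable_image_EFin; exact: measurable_itv.
Qed.

Lemma minteger n : measurable (integer_approx setT f n).
Proof. exact: emeasurable_fun_c_infty. Qed.

Lemma approx_ge0 n x : 0 <= approx setT f n x.
Proof.
rewrite /approx; apply: addr_ge0; last by rewrite indicE mulr_ge0.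
by apply: sumr_ge0 => k _; rewrite indicE !mulr_ge0.
Qed.

Lemma approx_sum n : approx setT f n =
  \sum_(k < n * 2 ^ n) (fun x => k%:R * 2 ^- n * \1_(dyadic_approx setT f n k) x)
  + (fun x => n%:R * \1_(integer_approx setT f n) x).
Proof.
apply/funext => x; rewrite /approx /=.
by rewrite fct_sumE.
Qed.

End approxfacts.

Import HBNNSimple.
Section good.
Context d1 d2 (Yc : measurableType d1) (X : measurableType d2) (R : realType)
  (P : probability (Yc * X)%type R).

Lemma msnd (A : set X) : measurable A -> measurable (snd @^-1` A : set (Yc * X)).
Proof. by move=> mA; rewrite -[X in measurable X]setTI; exact: measurable_snd. Qed.

Lemma sq_int_int (f : Yc * X -> R) : measurable_fun setT f ->
  P.-integrable setT (fun z => (f z ^+ 2)%:E) -> P.-integrable setT (EFin \o f).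
Proof.
move=> mf i2.
apply: (@le_integrable _ _ _ P setT measurableT (EFin \o f) (fun z => (1 + f z ^+ 2)%:E)).
- exact/measurable_EFinP.
- move=> z _ /=; rewrite lee_fin.
  rewrite [X in _ <= X]ger0_norm; last by rewrite addr_ge0 // sqr_ge0.
  have [h|h] := leP 0 (f z); [rewrite ger0_norm // | rewrite ltr0_norm //]; nra.
have -> : (fun z => (1 + f z ^+ 2)%:E) = (fun z => (1%R)%:E + (f z ^+ 2)%:E)%E.
  by apply/funext => z; rewrite /= EFinD.
exact: (integrableD measurableT (finite_measure_integrable_cst P 1%R measurableT) i2).
Qed.

Lemma indic_int (u : Yc * X -> R) (mu_ : measurable_fun setT u)
  (iu : P.-integrable setT (EFin \o u)) (A : set X) (mA : measurable A) :
  P.-integrable setT (fun z => (u z * \1_A z.2)%:E) /\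
  (\int[P]_z (u z * \1_A z.2)%:E = \int[P]_(z in snd @^-1` A) (u z)%:E)%E.
Proof.
have e : (fun z => (u z * \1_A z.2)%:E) = (((EFin \o u) \_ (snd @^-1` A))%E : Yc * X -> \bar R).
  apply/funext => z; rewrite patchE indicE.
  have -> : (z \in snd @^-1` A) = (z.2 \in A) by [].
  by case: (z.2 \in A); rewrite ?mulr1 ?mulr0.
split; last by rewrite e -integral_mkcond.
apply: (le_integrable measurableT _ _ iu).
  apply/measurable_EFinP; apply: measurable_funM => //.
  by apply: measurableT_comp; [exact: measurable_indic | exact: measurable_snd].
move=> z _ /=; rewrite lee_fin indicE.
by case: (z.2 \in A); rewrite ?mulr1 ?mulr0 ?normr0.
Qed.

Variables (v : Yc * X -> R) (w : X -> R).
Hypotheses (mv : measurable_fun setT v) (iv : P.-integrable setT (EFin \o v))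
  (mw : measurable_fun setT w) (iw : P.-integrable setT (fun z => (w z.2)%:E))
  (hvw : forall A, measurable A ->
    (\int[P]_(z in snd @^-1` A) (v z)%:E = \int[P]_(z in snd @^-1` A) (w z.2)%:E)%E).

Definition Good (s : X -> R) :=
  [/\ P.-integrable setT (fun z => (v z * s z.2)%:E),
      P.-integrable setT (fun z => (w z.2 * s z.2)%:E) &
      (\int[P]_z (v z * s z.2)%:E = \int[P]_z (w z.2 * s z.2)%:E)%E].

Lemma Good0 : Good 0.
Proof.
have e1 : (fun z => (v z * (0 : X -> R) z.2)%:E) = (fun=> 0%E).
  by apply: funext => z /=; rewrite mulr0.
have e2 : (fun z : Yc * X => (w z.2 * (0 : X -> R) z.2)%:E) = (fun=> 0%E).
  by apply: funext => z /=; rewrite mulr0.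
by split; rewrite ?e1 ?e2 //; exact: integrable0.
Qed.

Lemma GoodD s1 s2 : Good s1 -> Good s2 -> Good (s1 + s2).
Proof.
move=> [a1 b1 c1] [a2 b2 c2].
have e1 : (fun z => (v z * (s1 + s2) z.2)%:E) =
  ((fun z => (v z * s1 z.2)%:E) \+ (fun z => (v z * s2 z.2)%:E))%E.
  by apply/funext => z /=; rewrite mulrDr EFinD.
have e2 : (fun z : Yc * X => (w z.2 * (s1 + s2) z.2)%:E) =
  ((fun z => (w z.2 * s1 z.2)%:E) \+ (fun z => (w z.2 * s2 z.2)%:E))%E.
  by apply/funext => z /=; rewrite mulrDr EFinD.
split; rewrite ?e1 ?e2; try exact: integrableD.
by rewrite !integralD // c1 c2.
Qed.

Lemma GoodZ c s : Good s -> Good (fun x => c * s x).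
Proof.
move=> [a1 b1 c1].
have e1 : (fun z => (v z * (c * s z.2))%:E) =
  (fun z => c%:E * (v z * s z.2)%:E)%E.
  by apply/funext => z /=; rewrite -EFinM mulrCA.
have e2 : (fun z : Yc * X => (w z.2 * (c * s z.2))%:E) =
  (fun z => c%:E * (w z.2 * s z.2)%:E)%E.
  by apply/funext => z /=; rewrite -EFinM mulrCA.
split; rewrite ?e1 ?e2; try exact: integrableZl.
by rewrite !integralZl // c1.
Qed.

Lemma Good_indic A : measurable A -> Good (\1_A).
Proof.
move=> mA.
have [i1 e1] := indic_int mv iv mA.
have mw2 : measurable_fun setT (fun z : Yc * X => w z.2).
  exact: measurableT_comp mw measurable_snd.
have [i2 e2] := indic_int mw2 iw mA.
by split => //; rewrite e1 e2 hvw.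
Qed.

Lemma Good_sum N (F : 'I_N -> X -> R) :
  (forall k, Good (F k)) -> Good (\sum_(k < N) F k).
Proof.
move=> HF; apply: (big_ind Good Good0 GoodD) => k _; exact: HF.
Qed.

Lemma Good_approx (f : X -> \bar R) (mf : measurable_fun setT f) n :
  Good (approx setT f n).
Proof.
rewrite approx_sum; apply: GoodD.
  apply: Good_sum => k; apply: GoodZ; apply: Good_indic; exact: mdyadic.
apply: GoodZ; apply: Good_indic; exact: minteger.
Qed.

Lemma pt_sq (x a b : R) : 0 <= a <= Num.max x 0 -> 0 <= b <= Num.max (- x) 0 ->
  (a - b) ^+ 2 <= x * (a - b).
Proof.
move=> /andP[a0 ax] /andP[b0 bx].
have [h|h] := leP 0 x.
  rewrite max_l // in ax; rewrite max_r ?oppr_le0 // in bx.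
  have -> : b = 0 by apply/eqP; rewrite eq_le bx b0.
  nra.
have h' : x <= 0 := ltW h.
have h'' : 0 <= - x by rewrite oppr_ge0.
rewrite (max_r h') in ax; rewrite (max_l h'') in bx.
have -> : a = 0 by apply/eqP; rewrite eq_le ax a0.
nra.
Qed.

Lemma pt_mono (x a b a' b' : R) : 0 <= a <= Num.max x 0 -> 0 <= b <= Num.max (- x) 0 ->
  0 <= a' <= Num.max x 0 -> 0 <= b' <= Num.max (- x) 0 -> a <= a' -> b <= b' ->
  x * (a - b) <= x * (a' - b').
Proof.
move=> /andP[a0 ax] /andP[b0 bx] /andP[a0' ax'] /andP[b0' bx'] aa bb.
have [h|h] := leP 0 x.
  rewrite max_r ?oppr_le0 // in bx bx'.
  have -> : b = 0 by apply/eqP; rewrite eq_le bx b0.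
  have -> : b' = 0 by apply/eqP; rewrite eq_le bx' b0'.
  nra.
have h' : x <= 0 := ltW h.
rewrite (max_r h') in ax ax'.
have -> : a = 0 by apply/eqP; rewrite eq_le ax a0.
have -> : a' = 0 by apply/eqP; rewrite eq_le ax' a0'.
nra.
Qed.

Hypothesis iv2 : P.-integrable setT (fun z => (v z ^+ 2)%:E).

Let fp := fun x => (w^\+ x)%:E.
Let fm := fun x => (w^\- x)%:E.
Let mfp : measurable_fun setT fp.
Proof. by apply/measurable_EFinP; exact: measurable_funrpos. Qed.
Let mfm : measurable_fun setT fm.
Proof. by apply/measurable_EFinP; exact: measurable_funrneg. Qed.
Let fp0 : forall x, setT x -> (0 <= fp x)%E.
Proof. by move=> x _; rewrite lee_fin funrpos_ge0. Qed.
Let fm0 : forall x, setT x -> (0 <= fm x)%E.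
Proof. by move=> x _; rewrite lee_fin funrneg_ge0. Qed.

Let a n := approx setT fp n.
Let b n := approx setT fm n.
Let s n := fun x => a n x - b n x.

Let a_bnd n x : 0 <= a n x <= Num.max (w x) 0.
Proof.
rewrite approx_ge0 /=.
by have := le_approx n (fp0) (I : setT x); rewrite lee_fin.
Qed.

Let b_bnd n x : 0 <= b n x <= Num.max (- w x) 0.
Proof.
rewrite approx_ge0 /=.
by have := le_approx n (fm0) (I : setT x); rewrite lee_fin.
Qed.

Let a_nd n m x : (n <= m)%N -> a n x <= a m x.
Proof. by move=> nm; have /lefP := nd_approx setT fp nm; apply. Qed.
Let b_nd n m x : (n <= m)%N -> b n x <= b m x.
Proof. by move=> nm; have /lefP := nd_approx setT fm nm; apply. Qed.

Let ms n : measurable_fun setT (s n).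
Proof.
apply: measurable_funB.
  by rewrite /a -(nnsfun_approxE measurableT mfp); exact: measurable_funPT.
by rewrite /b -(nnsfun_approxE measurableT mfm); exact: measurable_funPT.
Qed.

Let Good_s n : Good (s n).
Proof.
have -> : s n = approx setT fp n + (fun x => -1 * approx setT fm n x).
  apply/funext => x; rewrite /s /a /b; transitivity (approx setT fp n x + (-1 * approx setT fm n x)); first by rewrite mulN1r. by [].
apply: GoodD; first exact: Good_approx.
by apply: GoodZ; exact: Good_approx.
Qed.

Let H_le n : (\int[P]_z (w z.2 * s n z.2)%:E <= \int[P]_z (v z ^+ 2)%:E)%E.
Proof.
have [i1 i2 e] := Good_s n.
have le : (\int[P]_z (2%:E * (v z * s n z.2)%:E) <=
           \int[P]_z ((v z ^+ 2)%:E + (w z.2 * s n z.2)%:E))%E.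
  apply: le_integral => //.
  - exact: integrableZl.
  - exact: integrableD.
  move=> z _; rewrite -EFinM -EFinD lee_fin.
  have := pt_sq (a_bnd n z.2) (b_bnd n z.2).
  rewrite /s; have := sqr_ge0 (v z - (a n z.2 - b n z.2)); move: (v z) (a n z.2) (b n z.2) (w z.2) => V A B W; nra.
rewrite integralZl // integralD // e in le.
have f1 := integrable_fin_num measurableT i2.
have f2 := integrable_fin_num measurableT iv2.
move: le f1 f2.
set H := (\int[P]_z (w z.2 * s n z.2)%:E)%E.
set V := (\int[P]_z (v z ^+ 2)%:E)%E.
move=> le f1 f2.
rewrite -(fineK f1) -(fineK f2) in le *.
rewrite -EFinM -EFinD lee_fin in le; rewrite lee_fin; lra.
Qed.

Lemma ce_contraction : (\int[P]_z (w z.2 ^+ 2)%:E <= \int[P]_z (v z ^+ 2)%:E)%E.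
Proof.
pose g' n (z : Yc * X) := (w z.2 * s n z.2)%:E.
have mg' n : measurable_fun setT (g' n).
  apply/measurable_EFinP; apply: measurable_funM.
    exact: measurableT_comp mw measurable_snd.
  exact: measurableT_comp (ms n) measurable_snd.
have g'0 n z : setT z -> (0 <= g' n z)%E.
  move=> _; rewrite lee_fin; have := pt_sq (a_bnd n z.2) (b_bnd n z.2).
  rewrite /s; move=> h; apply: le_trans h; exact: sqr_ge0.
have ndg' z : setT z -> {homo g'^~ z : n m / (n <= m)%N >-> (n <= m)%E}.
  move=> _ n m nm; rewrite lee_fin /s.
  apply: pt_mono; [exact: a_bnd|exact: b_bnd|exact: a_bnd|exact: b_bnd|exact: a_nd|exact: b_nd].
have cv := cvg_monotone_convergence (mu:=P) measurableT mg' g'0 ndg'.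
have -> : (\int[P]_z (w z.2 ^+ 2)%:E = \int[P]_z limn (g'^~ z))%E.
  apply: eq_integral => z _.
  have h2 : (fun n => s n z.2) @ \oo --> (w z.2).
    have -> : w z.2 = w^\+ z.2 - w^\- z.2 by rewrite -{1}(funrposBneg w).
    apply: cvgB.
      exact: (cvg_approx fp0 (I : setT z.2) (ltry _)).
    exact: (cvg_approx fm0 (I : setT z.2) (ltry _)).
  have cr : (fun n => w z.2 * s n z.2) @ \oo --> (w z.2 ^+ 2).
    have hc := cvgM (@cvg_cst _ (w z.2) nat \oo _) h2. rewrite expr2. exact: hc.
  rewrite (_ : g'^~ z = EFin \o (fun n => w z.2 * s n z.2)) //.
  rewrite EFin_lim; last exact: (cvgP _ cr).
  by rewrite (cvg_lim (@Rhausdorff R) cr).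
rewrite -(cvg_lim (@ereal_hausdorff R) cv).
apply: lime_le; first exact: (cvgP _ cv).
by apply: nearW => n; exact: H_le.
Qed.

End good.

Section mainlemmas.
Context d1 d2 (Yc : measurableType d1) (X : measurableType d2) (R : realType)
  (P : probability (Yc * X)%type R).

Lemma push (PX : probability X R)
  (hPX : forall A : set X, measurable A -> PX A = P (snd @^-1` A))
  (phi : X -> R) (mphi : measurable_fun setT phi) (phi0 : forall x, 0 <= phi x) :
  (\int[PX]_(x in setT) (phi x)%:E = \int[P]_(z in setT) (phi z.2)%:E)%E.
Proof.
rewrite (eq_measure_integral (pushforward P snd)); last first.
  by move=> A mA _; exact: (hPX A mA).
rewrite ge0_integral_pushforward //.
- exact/measurable_EFinP.
- by move=> x _; rewrite lee_fin.
Qed.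

Lemma sqD (a b : Yc * X -> R) : sq_integrable P a -> sq_integrable P b ->
  sq_integrable P (fun z => a z + b z).
Proof.
move=> [ma ia] [mb ib]; split; first exact: measurable_funD.
apply: (@le_integrable _ _ _ P setT measurableT _
  (fun z => (2%:R%:E * (a z ^+ 2)%:E) + (2%:R%:E * (b z ^+ 2)%:E))%E).
- by apply/measurable_EFinP; apply: measurable_funX; exact: measurable_funD.
- move=> z _ /=; rewrite lee_fin.
  rewrite ger0_norm ?sqr_ge0 // ger0_norm; last by rewrite addr_ge0 // mulr_ge0 // sqr_ge0.
  have := sqr_ge0 (a z - b z); nra.
- by apply: integrableD => //; apply: integrableZl.
Qed.

Lemma sqN (a : Yc * X -> R) : sq_integrable P a -> sq_integrable P (fun z => - a z).
Proof.
move=> [ma ia]; split; first exact: measurable_funN.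
by under eq_fun do rewrite sqrrN.
Qed.

Lemma sqB (a b : Yc * X -> R) : sq_integrable P a -> sq_integrable P b ->
  sq_integrable P (fun z => a z - b z).
Proof. by move=> ha hb; exact: (sqD ha (sqN hb)). Qed.

Lemma sqT (v : Yc * X -> R) (w : X -> R) : sq_integrable P v ->
  measurable_fun setT w -> P.-integrable setT (fun z => (w z.2)%:E) ->
  (forall A, measurable A ->
    (\int[P]_(z in snd @^-1` A) (v z)%:E = \int[P]_(z in snd @^-1` A) (w z.2)%:E)%E) ->
  sq_integrable P (fun z => w z.2).
Proof.
move=> [mv iv2] mw iw hvw.
have mw2 : measurable_fun setT (fun z : Yc * X => w z.2).
  exact: measurableT_comp mw measurable_snd.
split => //.
apply/integrableP; split.
  by apply/measurable_EFinP; exact: measurable_funX.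
rewrite (eq_integral (fun z => (w z.2 ^+ 2)%:E)); last first.
  by move=> z _; rewrite abse_EFin ger0_norm // sqr_ge0.
apply: le_lt_trans (ce_contraction mv (sq_int_int mv iv2) mw iw hvw iv2) _.
by case/fin_numPlt/andP: (integrable_fin_num measurableT iv2).
Qed.

Definition Zq (u : Yc * X -> R) := P.-integrable setT (EFin \o u) /\
  forall A, measurable A -> (\int[P]_(z in snd @^-1` A) (u z)%:E = 0)%E.

Lemma ZpD a b : Zq a -> Zq b -> Zq (fun z => a z + b z).
Proof.
move=> [ia ha] [ib hb].
have e : EFin \o (fun z => a z + b z) = (fun z => (a z)%:E + (b z)%:E)%E.
  by apply/funext => z; rewrite /= EFinD.
split; first by rewrite e; exact: integrableD.
move=> A mA; rewrite (eq_integral (fun z => (a z)%:E + (b z)%:E)%E); last first.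
  by move=> z _; rewrite EFinD.
rewrite integralD //; first by rewrite ha // hb // adde0.
- exact: (@msnd _ _ Yc _ _ mA).
- exact: (integrableS measurableT ((@msnd _ _ Yc _ _ mA)) (subsetT _) ia).
- exact: (integrableS measurableT ((@msnd _ _ Yc _ _ mA)) (subsetT _) ib).
Qed.

Lemma ZpN a : Zq a -> Zq (fun z => - a z).
Proof.
move=> [ia ha].
have e : EFin \o (fun z => - a z) = (fun z => (-1)%:E * (a z)%:E)%E.
  by apply/funext => z; rewrite /= -EFinM mulN1r.
split; first by rewrite e; exact: integrableZl.
move=> A mA; rewrite (eq_integral (fun z => (-1)%:E * (a z)%:E)%E); last first.
  by move=> z _; rewrite -EFinM mulN1r.
rewrite integralZl //; first by rewrite ha // mule0.
- exact: (@msnd _ _ Yc _ _ mA).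
- exact: (integrableS measurableT ((@msnd _ _ Yc _ _ mA)) (subsetT _) ia).
Qed.

Lemma Zp_ce f h : sq_integrable P f -> is_cond_exp_X P f h ->
  Zq (fun z => f z - h z.2).
Proof.
move=> [mf if2] [mh [ih ph]].
have iF := sq_int_int mf if2.
have e : EFin \o (fun z => f z - h z.2) = (fun z => (f z)%:E - (h z.2)%:E)%E.
  by apply/funext => z; rewrite /= EFinB.
split; first by rewrite e; exact: integrableB.
move=> A mA; rewrite (eq_integral (fun z => (f z)%:E - (h z.2)%:E)%E); last first.
  by move=> z _; rewrite EFinB.
have mA' := (@msnd _ _ Yc _ _ mA).
rewrite integralB //; first by rewrite ph // subee // integrable_fin_num //; exact: (integrableS measurableT ((@msnd _ _ Yc _ _ mA)) (subsetT _) ih).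
- exact: integrableS iF.
- exact: (integrableS measurableT ((@msnd _ _ Yc _ _ mA)) (subsetT _) ih).
Qed.

Lemma Zp_prop v w : P.-integrable setT (EFin \o v) ->
  P.-integrable setT (fun z => (w z.2)%:E) -> Zq (fun z => v z - w z.2) ->
  forall A, measurable A ->
    (\int[P]_(z in snd @^-1` A) (v z)%:E = \int[P]_(z in snd @^-1` A) (w z.2)%:E)%E.
Proof.
move=> iv iw [_ hz] A mA.
have mA' := (@msnd _ _ Yc _ _ mA).
have := hz A mA.
rewrite (eq_integral (fun z => (v z)%:E - (w z.2)%:E)%E); last first.
  by move=> z _; rewrite EFinB.
rewrite integralB //; [|exact: integrableS iv|exact: integrableS iw].
have f1 : (\int[P]_(z in snd @^-1` A) (v z)%:E)%E \is a fin_num.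
  by apply: integrable_fin_num => //; exact: (integrableS measurableT ((@msnd _ _ Yc _ _ mA)) (subsetT _) iv).
have f2 : (\int[P]_(z in snd @^-1` A) (w z.2)%:E)%E \is a fin_num.
  by apply: integrable_fin_num => //; exact: (integrableS measurableT ((@msnd _ _ Yc _ _ mA)) (subsetT _) iw).
rewrite -(fineK f1) -(fineK f2) -EFinB => -[] /eqP; rewrite subr_eq0 => /eqP ->.
by [].
Qed.

End mainlemmas.

Unset Implicit Arguments.

Theorem proposition1 (R : realType) (d1 d2 : measure_display)
  (Yc : measurableType d1) (X : measurableType d2)
  (P : probability (Yc * X)%type R)
  (PX : probability X R)
  (hPX : forall A : set X, measurable A -> PX A = P (snd @^-1` A))
  (ce : (Yc * X -> R) -> X -> R)
  (hce : forall f, sq_integrable P f -> is_cond_exp_X P f (ce f))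
  (Theta : Type) (ftheta : Theta -> Yc * X -> R)
  (F : set (Yc * X -> R))
  (hF_L2 : forall f, F f -> sq_integrable P f)
  (hFTheta_sub : F_Theta ftheta F ce `<=` F)
  (hF_lin : is_linear_space F)
  (hFTheta_lin : is_linear_space (F_Theta ftheta F ce)) :
  forall g, F g ->
    msd_set P (F_Theta ftheta F ce) g =
    ereal_inf [set msd PX (ce (ftheta theta)) (ce g) | theta in [set: Theta]].
Proof.
move=> g Fg.
have [F0 [FD FZ]] := hF_lin.
have sq0 : sq_integrable P (fun _ => 0 : R) := hF_L2 _ F0.
set c0 := ce (fun _ => 0).
have [mc0 [ic0 pc0]] := hce _ sq0.
have sqc0 : sq_integrable P (fun z : Yc * X => c0 z.2).
  by apply: (sqT sq0 mc0 ic0) => A mA; rewrite -pc0.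
have Ff' th : F (fun z : Yc * X => ftheta th z + 0 - c0 z.2).
  by apply: hFTheta_sub; exists th, (fun _ => 0); split.
have sqth th : sq_integrable P (ftheta th).
  have -> : ftheta th = (fun z : Yc * X => (ftheta th z + 0 - c0 z.2) + c0 z.2).
    by apply/funext => z; rewrite addr0 subrK.
  exact: sqD (hF_L2 _ (Ff' th)) sqc0.
have sqce f : sq_integrable P f -> sq_integrable P (fun z : Yc * X => ce f z.2).
  move=> hf; have [m [i p]] := hce _ hf.
  exact: sqT hf m i p.
have Zce f : sq_integrable P f -> Zq P (fun z : Yc * X => f z - ce f z.2).
  by move=> hf; exact: Zp_ce hf (hce _ hf).
have mce f : sq_integrable P f -> measurable_fun setT (ce f).
  by move=> hf; have [m _] := hce _ hf.
have ice f : sq_integrable P f -> P.-integrable setT (fun z : Yc * X => (ce f z.2)%:E).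
  by move=> hf; have [_ [i _]] := hce _ hf.
have sqg := hF_L2 _ Fg.
have pushth th : msd PX (ce (ftheta th)) (ce g) =
    (\int[P]_(z in setT) ((ce (ftheta th) z.2 - ce g z.2) ^+ 2)%:E)%E.
  rewrite /msd (push hPX) //.
  - by apply: measurable_funX; apply: measurable_funB; [exact: mce | exact: mce].
  - by move=> x; exact: sqr_ge0.
apply/eqP; rewrite eq_le; apply/andP; split.
- apply: le_ereal_inf_tmp => _ [th _ <-].
  pose f := fun z : Yc * X => g z + (-1) * (ftheta th z + 0 - c0 z.2).
  have Ff : F f by apply: FD => //; apply: FZ; exact: Ff' th.
  have sqf := hF_L2 _ Ff.
  pose h := fun z : Yc * X => ftheta th z + f z - ce f z.2.
  apply: ge_ereal_inf; exists (msd P h g).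
    by exists h => //; exists th, f.
  rewrite pushth /msd.
  rewrite (eq_integral (fun z : Yc * X => ((c0 z.2 - ce f z.2) ^+ 2)%:E)); last first.
    by move=> z _; rewrite /h /f; congr (_ ^+ 2)%:E; ring.
  have mv : measurable_fun setT (fun z : Yc * X => ce (ftheta th) z.2 - ce g z.2).
    apply: measurable_funB; apply: measurableT_comp measurable_snd; exact: mce.
  have sqv := sqB (sqce _ (sqth th)) (sqce _ sqg).
  have mw : measurable_fun setT (fun x => c0 x - ce f x).
    by apply: measurable_funB => //; exact: mce.
  have iw : P.-integrable setT (fun z : Yc * X => (c0 z.2 - ce f z.2)%:E).
    have -> : (fun z : Yc * X => (c0 z.2 - ce f z.2)%:E) = (fun z : Yc * X => (c0 z.2)%:E - (ce f z.2)%:E)%E.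
      by apply/funext => z; rewrite EFinB.
    by apply: integrableB => //; exact: ice.
  apply: (ce_contraction mv (sq_int_int mv sqv.2) mw iw _ sqv.2).
  apply: (Zp_prop (w := fun x => c0 x - ce f x) (sq_int_int mv sqv.2) iw).
  have := ZpD (ZpD (ZpN (Zce _ (sqth th))) (Zce _ sqg)) (ZpN (Zce _ sqf)).
  have -> : (fun z : Yc * X => (- (ftheta th z - ce (ftheta th) z.2) + (g z - ce g z.2))
      + - (f z - ce f z.2)) =
    (fun z : Yc * X => ce (ftheta th) z.2 - ce g z.2 - (c0 z.2 - ce f z.2)).
    by apply/funext => z; rewrite /f; ring.
  by [].
- apply: le_ereal_inf_tmp => _ [h [th [f [Ff ->]]] <-].
  apply: ge_ereal_inf; exists (msd PX (ce (ftheta th)) (ce g)).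
    by exists th.
  rewrite pushth /msd.
  have sqf := hF_L2 _ Ff.
  have sqv := sqB (sqB (sqD (sqth th) sqf) (sqce _ sqf)) sqg.
  have mv := sqv.1.
  have mw : measurable_fun setT (fun x => ce (ftheta th) x - ce g x).
    by apply: measurable_funB => //; exact: mce.
  have iw : P.-integrable setT (fun z : Yc * X => (ce (ftheta th) z.2 - ce g z.2)%:E).
    have -> : (fun z : Yc * X => (ce (ftheta th) z.2 - ce g z.2)%:E) =
      (fun z : Yc * X => (ce (ftheta th) z.2)%:E - (ce g z.2)%:E)%E.
      by apply/funext => z; rewrite EFinB.
    by apply: integrableB => //; exact: ice.
  apply: (ce_contraction mv (sq_int_int mv sqv.2) mw iw _ sqv.2).
  apply: (Zp_prop (w := fun x => ce (ftheta th) x - ce g x) (sq_int_int mv sqv.2) iw).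
  have := ZpD (ZpD (Zce _ (sqth th)) (Zce _ sqf)) (ZpN (Zce _ sqg)).
  have -> : (fun z : Yc * X => ((ftheta th z - ce (ftheta th) z.2) + (f z - ce f z.2))
      + - (g z - ce g z.2)) =
    (fun z : Yc * X => ftheta th z + f z - ce f z.2 - g z - (ce (ftheta th) z.2 - ce g z.2)).
    by apply/funext => z; ring.
  by [].
Qed.
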